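(* Let $(B,\lfloor\cdot,\cdot\rfloor)$ be an SSD space with quadratic form $q$ and let $A\subset B$ be $q$-representable. If $\Phi_A(b)\ge q(b)$ for all $b\in\operatorname{conv}^w A$, then $A=G_{\Phi_A}$.
   Context: An SSD space is a pair $(B,\lfloor\cdot,\cdot\rfloor)$ with $B$ a nonzero real vector space and $\lfloor\cdot,\cdot\rfloor$ a symmetric bilinear form; $q(b)=\frac12\lfloor b,b\rfloor$. $w(B,B)$ is the coarsest topology on $B$ making all maps $b\mapsto\lfloor b,c\rfloor$ continuous; $\operatorname{conv}^w A$ is the $w(B,B)$-closure of the convex hull of $A$. A nonempty $A\subset B$ is $q$-positive if $q(b-c)\ge0$ for all $b,c\in A$. $\Phi_A(x)=\sup_{a\in A}\{\lfloor x,a\rfloor-q(a)\}$. For proper convex $f$, $f^{@}(b)=\sup_{c\in B}\{\lfloor c,b\rfloor-f(c)\}$, $\mathcal{P}_q(f)=\{b: f(b)=q(b)\}$, $G_f=\{b: f(b)+f^{@}(b)=\lfloor b,b\rfloor\}$. A $q$-positive set $A$ is $q$-representable if there is a $w(B,B)$-lsc proper convex $f:B\to\mathbb{R}\cup\{+\infty\}$ with $f\ge q$ on $B$ and $\mathcal{P}_q(f)=A$. *)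

(* Defs.v *)
From HB Require Import structures.
From mathcomp Require Import all_boot all_order all_algebra.
From mathcomp Require Import all_classical all_reals ereal.
Set Implicit Arguments. Unset Strict Implicit. Unset Printing Implicit Defensive.
Import Order.TTheory GRing.Theory Num.Theory.
Local Open Scope classical_set_scope.
Local Open Scope ring_scope.

Section SSD.
Variables (R : realType) (B : lmodType R) (bf : B -> B -> R).

Definition SSD_space : Prop :=
  (exists b : B, b != 0) /\
  (forall b c, bf b c = bf c b) /\
  (forall (a : R) (x y z : B), bf (a *: x + y) z = a * bf x z + bf y z).

Definition qf (b : B) : R := bf b b / 2.

(* basic w(B,B)-neighbourhood of x determined by finitely many c's and eps *)
Definition wball (x : B) (cs : seq B) (eps : R) : set B :=
  [set y | forall c, c \in cs -> `|bf (y - x) c| < eps].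

Definition wclosure (S : set B) : set B :=
  [set x | forall (cs : seq B) (eps : R), 0 < eps ->
           exists2 y, S y & wball x cs eps y].

Definition wlsc (f : B -> \bar R) : Prop :=
  forall (x : B) (t : R), (t%:E < f x)%E ->
    exists cs : seq B, exists2 eps : R, 0 < eps &
      forall y, wball x cs eps y -> (t%:E < f y)%E.

Definition proper_fun (f : B -> \bar R) : Prop :=
  (forall x, f x != -oo%E) /\ (exists x, f x != +oo%E).

Definition convex_fun (f : B -> \bar R) : Prop :=
  forall (x y : B) (l : R), 0 < l -> l < 1 ->
    (f (l *: x + (1 - l) *: y)%R <= l%:E * f x + (1 - l)%:E * f y)%E.

Definition conv (A : set B) : set B :=
  [set x | exists s : seq (R * B),
     [/\ (forall p, p \in s -> 0 <= p.1 /\ A p.2),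
         \sum_(p <- s) p.1 = 1 &
         x = \sum_(p <- s) p.1 *: p.2]].

Definition convw (A : set B) : set B := wclosure (conv A).

Definition q_positive (A : set B) : Prop :=
  A !=set0 /\ (forall b c, A b -> A c -> 0 <= qf (b - c)).

Definition PhiA (A : set B) (x : B) : \bar R :=
  ereal_sup [set ((bf x a - qf a)%:E) | a in A].

Definition fat (f : B -> \bar R) (b : B) : \bar R :=
  ereal_sup [set ((bf c b)%:E - f c)%E | c in [set: B]].

Definition Pq (f : B -> \bar R) : set B := [set b | f b = (qf b)%:E].

Definition Gf (f : B -> \bar R) : set B :=
  [set b | (f b + fat f b)%E = (bf b b)%:E].

Definition q_representable (A : set B) : Prop :=
  q_positive A /\
  exists f : B -> \bar R,
    [/\ wlsc f, proper_fun f, convex_fun f,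
        (forall b, ((qf b)%:E <= f b)%E) & Pq f = A].

End SSD.

(* Main.v *)
Require Import Defs.
From HB Require Import structures.
From mathcomp Require Import all_boot all_order all_algebra.
From mathcomp Require Import all_classical all_reals ereal.
From mathcomp Require Import lra ring.
Set Implicit Arguments. Unset Strict Implicit. Unset Printing Implicit Defensive.
Import Order.TTheory GRing.Theory Num.Theory.
Local Open Scope classical_set_scope.
Local Open Scope ring_scope.

Definition lf (R : realType) (m : nat) (l x : nat -> R) : R :=
  \sum_(i < m) l i * x i.

Lemma cone_sep (R : realType) (m : nat) (D : (nat -> R) -> Prop) :
  (exists x, D x) ->
  (forall x y, D x -> D y -> D (fun i => x i + y i)) ->
  (forall r x, 0 <= r -> D x -> D (fun i => r * x i)) ->
  (exists v, forall x, D x -> exists2 i, (i < m)%N & x i != v i) ->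
  exists l : nat -> R, (exists2 i, (i < m)%N & l i != 0) /\
    forall x, D x -> lf m l x <= 0.
Proof.
elim: m D => [|m IH] D [x0 Dx0] Dadd Dsc [v Hv].
  by case: (Hv _ Dx0).
have lfS : forall (l x : nat -> R), lf m.+1 l x = lf m l x + l m * x m.
  by move=> l x; rewrite /lf big_ord_recr.
have lfext : forall (l l' x : nat -> R), (forall i, (i < m)%N -> l i = l' i) ->
   lf m l x = lf m l' x.
  by move=> l l' x E; apply: eq_bigr => i _; rewrite E.
pose ext (l : nat -> R) (a : R) := fun i => if (i < m)%N then l i else a.
have lf_ext : forall l a x, lf m.+1 (ext l a) x = lf m l x + a * x m.
  move=> l a x; rewrite lfS /ext ltnn; congr (_ + _).
  by apply: lfext => i ->.
have lf0 : forall x : nat -> R, lf m (fun _ => 0) x = 0.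
  by move=> x; rewrite /lf big1 // => i _; rewrite mul0r.
have [Hneg|] := pselect (forall x, D x -> x m <= 0).
  exists (ext (fun _ => 0) 1); split.
    by exists m => //; rewrite /ext ltnn oner_neq0.
  by move=> x Dx; rewrite lf_ext lf0 add0r mul1r; apply: Hneg.
move=> /existsNP [y /not_implyP [Dy /negP]]; rewrite -ltNge => ym.
have [Hpos|] := pselect (forall x, D x -> 0 <= x m).
  exists (ext (fun _ => 0) (-1)); split.
    by exists m => //; rewrite /ext ltnn oppr_eq0 oner_neq0.
  move=> x Dx; rewrite lf_ext lf0 add0r mulN1r oppr_le0; exact: Hpos.
move=> /existsNP [w /not_implyP [Dw /negP]]; rewrite -ltNge => wm.
pose D0 x := D x /\ x m = 0.
have h1 : exists x, D0 x.
  by exists (fun i => 0 * x0 i); split; [apply: Dsc | rewrite mul0r].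
have h2 : forall x y, D0 x -> D0 y -> D0 (fun i => x i + y i).
  by move=> x1 x2 [D1 e1] [D2 e2]; split; [apply: Dadd | rewrite e1 e2 addr0].
have h3 : forall r x, 0 <= r -> D0 x -> D0 (fun i => r * x i).
  by move=> r x1 r0 [D1 e1]; split; [apply: Dsc | rewrite e1 mulr0].
have h4 : exists v, forall x, D0 x -> exists2 i, (i < m)%N & x i != v i.
  apply: contrapT => Hfull.
  have Hf : forall u, exists2 x, D0 x & forall i, (i < m)%N -> x i = u i.
    move=> u; apply: contrapT => Hu; apply: Hfull; exists u => x D0x.
    apply: contrapT => Hx; apply: Hu; exists x => // i im.
    by apply/eqP; apply: contrapT => /negP ne; apply: Hx; exists i.
  have [vm0|vm0] := leP 0 (v m).
    pose r := v m / y m.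
    have [u [Du um] Hu] := Hf (fun i => v i - r * y i).
    have := Hv (fun i => r * y i + u i) (Dadd _ _ (Dsc _ _ _ Dy) Du).
    have r0 : 0 <= r by apply: divr_ge0 => //; apply: ltW.
    move=> /(_ r0) [i im]; rewrite ltnS leq_eqVlt in im.
    case/orP: im => [/eqP ->|im].
      by rewrite um addr0 /r mulfVK ?eqxx // gt_eqF.
    by rewrite Hu // addrC subrK eqxx.
  pose r := v m / w m.
  have [u [Du um] Hu] := Hf (fun i => v i - r * w i).
  have r0 : 0 <= r by apply: ltW; rewrite /r -mulrNN; apply: mulr_gt0; rewrite oppr_gt0 ?invr_lt0.
  have := Hv (fun i => r * w i + u i) (Dadd _ _ (Dsc _ _ r0 Dw) Du).
  move=> [i im]; rewrite ltnS leq_eqVlt in im.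
  case/orP: im => [/eqP ->|im].
    by rewrite um addr0 /r mulfVK ?eqxx // lt_eqF.
  by rewrite Hu // addrC subrK eqxx.
have [l [nz Hl]] := IH D0 h1 h2 h3 h4.
pose S := [set - lf m l x / x m | x in [set x | D x /\ x m < 0]].
have key : forall x z, D x -> D z -> x m < 0 -> 0 < z m ->
    - lf m l x / x m <= - lf m l z / z m.
  move=> x z Dx Dz xm zm.
  have Dc := Dadd _ _ (Dsc (z m) x (ltW zm) Dx) (Dsc (- x m) z _ Dz).
  have := Hl _ (conj (Dc _) _).
  have H1 : lf m l (fun i => z m * x i + - x m * z i) =
            z m * lf m l x - x m * lf m l z.
    rewrite /lf mulr_sumr mulr_sumr -sumrB; apply: eq_bigr => i _; lra.
  rewrite H1.
  move=> /(_ ltac:(rewrite oppr_ge0; exact: ltW)) /(_ ltac:(lra)).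
  move=> H.
  rewrite ler_ndivrMr // mulrAC ler_pdivrMr //.
  nra.
have Sne : S !=set0 by exists (- lf m l w / w m); exists w.
have Sub : ubound S (- lf m l y / y m).
  by move=> _ [x [Dx xm] <-]; apply: key.
pose a := sup S.
have Ha : forall x, D x -> x m < 0 -> - lf m l x / x m <= a.
  move=> x Dx xm; apply: ub_le_sup; first by exists (- lf m l y / y m).
  by exists x.
have Ha2 : forall z, D z -> 0 < z m -> a <= - lf m l z / z m.
  move=> z Dz zm; apply: ge_sup => // _ [x [Dx xm] <-]; exact: key.
exists (ext l a); split.
  by case: nz => i im li; exists i; rewrite ?/ext ?im // ltnW.
move=> x Dx; rewrite lf_ext.
have [xm|xm|xm] := ltgtP (x m) 0.
- have := Ha x Dx xm; rewrite ler_ndivrMr //; lra.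
- have := Ha2 x Dx xm; rewrite ler_pdivlMr //; lra.
- by rewrite xm mulr0 addr0; apply: Hl.
Qed.

Lemma box_sep (R : realType) (m : nat) (K : (nat -> R) -> Prop) (p : nat -> R)
  (eps : R) : 0 < eps -> (exists k, K k) ->
  (forall k1 k2 (l : R), 0 <= l -> l <= 1 -> K k1 -> K k2 ->
     K (fun i => l * k1 i + (1 - l) * k2 i)) ->
  (forall k, K k -> exists2 i, (i < m)%N & eps <= `|k i - p i|) ->
  exists l : nat -> R, 0 < \sum_(i < m) `|l i| /\
    forall k, K k -> lf m l k + eps / 2 * \sum_(i < m) `|l i| <= lf m l p.
Proof.
move=> e0 [k0 Kk0] Kc Kbox.
have e20 : 0 < eps / 2 by apply: divr_gt0.
pose D (x : nat -> R) := exists (r : R) k z, [/\ 0 <= r, K k,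
   (forall i, (i < m)%N -> `|z i| <= eps / 2) &
   x = (fun i => r * (k i - p i + z i))].
have h1 : exists x, D x.
  exists (fun i => 0 * (k0 i - p i + 0)), 0, k0, (fun _ => 0); split => //.
  by move=> i _; rewrite normr0 ltW.
have h2 : forall x y, D x -> D y -> D (fun i => x i + y i).
  move=> x y [r1 [k1 [z1 [r10 K1 z1b ->]]]] [r2 [k2 [z2 [r20 K2 z2b ->]]]].
  have [s0|s0] := eqVneq (r1 + r2) 0.
    have r1z : r1 = 0 by lra.
    have r2z : r2 = 0 by lra.
    exists 0, k1, z1; split => //; apply: funext => i /=.
    by rewrite r1z r2z !mul0r addr0.
  have [s s_eq] : exists s, s = r1 + r2 by exists (r1 + r2).
  have [l l_eq] : exists l : R, l = r1 / s by exists (r1 / s).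
  have sn0 : s != 0 by rewrite s_eq.
  have e1 : s * l = r1 by rewrite l_eq mulrC divfK.
  have e2 : s * (1 - l) = r2 by rewrite mulrBr mulr1 e1 s_eq; lra.
  have spos : 0 < s by rewrite lt_neqAle eq_sym sn0 s_eq; lra.
  have l0 : 0 <= l by rewrite l_eq divr_ge0 // ltW.
  have l1 : l <= 1.
    have : s * l <= s * 1 by rewrite e1 mulr1 s_eq; lra.
    by rewrite ler_pM2l.
  exists s, (fun i => l * k1 i + (1 - l) * k2 i),
    (fun i => l * z1 i + (1 - l) * z2 i); split.
  - exact: ltW.
  - exact: Kc.
  - move=> i im; have := ler_normD (l * z1 i) ((1 - l) * z2 i).
    have h1l : 0 <= 1 - l by lra.
    rewrite normrM (normrM (1 - l)) (ger0_norm l0) (ger0_norm h1l).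
    have := z1b i im; have := z2b i im.
    move=> b2 b1 H; apply: (le_trans H).
    have := ler_wpM2l l0 b1; have := ler_wpM2l h1l b2; lra.
  - apply: funext => i /=; rewrite -e1 -e2; ring.
have h3 : forall r x, 0 <= r -> D x -> D (fun i => r * x i).
  move=> r x r0 [r1 [k1 [z1 [r10 K1 z1b ->]]]].
  exists (r * r1), k1, z1; split => //; first exact: mulr_ge0.
  by apply: funext => i; rewrite mulrA.
have h4 : exists v, forall x, D x -> exists2 i, (i < m)%N & x i != v i.
  exists (fun i => p i - k0 i) => x [r [k [z [r0 Kk zb ->]]]].
  apply: contrapT => Hx.
  have E : forall i, (i < m)%N -> r * (k i - p i + z i) = p i - k0 i.
    move=> i im; apply/eqP; apply: contrapT => /negP ne; apply: Hx.
    by exists i.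
  have t0 : 0 < 1 + r by lra.
  have tn0 : 1 + r != 0 by rewrite gt_eqF.
  pose l := r / (1 + r).
  have l0 : 0 <= l by rewrite divr_ge0 // ltW.
  have l1 : l <= 1 by rewrite ler_pdivrMr // mul1r; lra.
  have [i im Hi] := Kbox _ (Kc k k0 l l0 l1 Kk Kk0).
  have E' : k0 i = p i - r * (k i - p i + z i) by have := E i im; lra.
  have : l * k i + (1 - l) * k0 i - p i = - (l * z i).
    by rewrite E' /l; field.
  move=> Hc; move: Hi; rewrite Hc normrN normrM ger0_norm //.
  have := zb i im => zbi.
  have : l * `|z i| <= 1 * (eps / 2) by apply: ler_pM => //.
  lra.
have [l [[i im li] Hl]] := cone_sep h1 h2 h3 h4.
have Spos : 0 < \sum_(i < m) `|l i|.
  rewrite (bigD1 (Ordinal im)) //= ltr_pwDl ?normr_gt0 //.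
  by apply: sumr_ge0 => j _; exact: normr_ge0.
exists l; split => // k Kk.
pose z i := if 0 <= l i then eps / 2 else - (eps / 2).
have Dk : D (fun i => 1 * (k i - p i + z i)).
  exists 1, k, z; split => // j jm; rewrite /z.
  by case: ifP => _; rewrite ?normrN ger0_norm // ltW.
have := Hl _ Dk.
have -> : lf m l (fun i => 1 * (k i - p i + z i)) =
   lf m l k - lf m l p + eps / 2 * \sum_(i < m) `|l i|.
  rewrite /lf mulr_sumr -sumrB -big_split; apply: eq_bigr => j _ /=.
  rewrite /z; case: ifP => [lj|/negbT lj].
    rewrite ger0_norm //; ring.
  rewrite -ltNge in lj; rewrite ltr0_norm //; ring.
lra.
Qed.

Definition bilin (R : realType) (B : lmodType R) (bf : B -> B -> R) :=
  (forall b c, bf b c = bf c b) /\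
  (forall (a : R) (x y z : B), bf (a *: x + y) z = a * bf x z + bf y z).

Lemma bf0l (R : realType) (B : lmodType R) (bf : B -> B -> R) :
  bilin bf -> forall z, bf 0 z = 0.
Proof.
move=> [_ L] z; have := L 1 0 0 z; rewrite scale1r addr0 mul1r => H.
have : bf 0 z + bf 0 z - bf 0 z = bf 0 z - bf 0 z by rewrite -H.
by rewrite addrK subrr.
Qed.

Lemma bfDl (R : realType) (B : lmodType R) (bf : B -> B -> R) :
  bilin bf -> forall x y z, bf (x + y) z = bf x z + bf y z.
Proof. by move=> [_ L] x y z; rewrite -(scale1r x) L mul1r scale1r. Qed.

Lemma bfZl (R : realType) (B : lmodType R) (bf : B -> B -> R) :
  bilin bf -> forall a x z, bf (a *: x) z = a * bf x z.
Proof.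
move=> H a x z; have := (proj2 H) a x 0 z; rewrite addr0 (bf0l H) addr0 //.
Qed.

Lemma bfNl (R : realType) (B : lmodType R) (bf : B -> B -> R) :
  bilin bf -> forall x z, bf (- x) z = - bf x z.
Proof. by move=> H x z; rewrite -scaleN1r (bfZl H) mulN1r. Qed.

Lemma bfBl (R : realType) (B : lmodType R) (bf : B -> B -> R) :
  bilin bf -> forall x y z, bf (x - y) z = bf x z - bf y z.
Proof. by move=> H x y z; rewrite (bfDl H) (bfNl H). Qed.

Lemma bfDr (R : realType) (B : lmodType R) (bf : B -> B -> R) :
  bilin bf -> forall x y z, bf z (x + y) = bf z x + bf z y.
Proof. by move=> H x y z; rewrite !(proj1 H z) (bfDl H). Qed.

Lemma bfZr (R : realType) (B : lmodType R) (bf : B -> B -> R) :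
  bilin bf -> forall a x z, bf z (a *: x) = a * bf z x.
Proof. by move=> H a x z; rewrite !(proj1 H z) (bfZl H). Qed.

Lemma bfBr (R : realType) (B : lmodType R) (bf : B -> B -> R) :
  bilin bf -> forall x y z, bf z (x - y) = bf z x - bf z y.
Proof. by move=> H x y z; rewrite !(proj1 H z) (bfBl H). Qed.

Lemma bf0r (R : realType) (B : lmodType R) (bf : B -> B -> R) :
  bilin bf -> forall z, bf z 0 = 0.
Proof. by move=> H z; rewrite (proj1 H) (bf0l H). Qed.

Lemma bf_sumr (R : realType) (B : lmodType R) (bf : B -> B -> R) :
  bilin bf -> forall n (F : 'I_n -> B) y,
  bf y (\sum_(i < n) F i) = \sum_(i < n) bf y (F i).
Proof.
move=> H n F y; elim/big_rec2: _ => [|i a b _ <-]; first exact: bf0r.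
exact: bfDr.
Qed.

Lemma qfB (R : realType) (B : lmodType R) (bf : B -> B -> R) :
  bilin bf -> forall a c, qf bf (a - c) = qf bf a - bf a c + qf bf c.
Proof.
move=> H a c; rewrite /qf (bfBl H) !(bfBr H) (proj1 H c a); by field.
Qed.

Lemma sepB (R : realType) (B : lmodType R) (bf : B -> B -> R)
  (cs : seq B) (eps : R) (K : B -> R -> Prop) (x : B) (t : R) :
  bilin bf -> 0 < eps -> (exists y s, K y s) ->
  (forall y1 s1 y2 s2 (l : R), 0 <= l -> l <= 1 -> K y1 s1 -> K y2 s2 ->
     K (l *: y1 + (1 - l) *: y2) (l * s1 + (1 - l) * s2)) ->
  (forall y s, K y s ->
     ~ ((forall c, c \in cs -> `|bf (y - x) c| < eps) /\ `|s - t| < eps)) ->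
  exists d (mu delta : R), 0 < delta /\
    forall y s, K y s -> bf y d + mu * s + delta <= bf x d + mu * t.
Proof.
move=> H e0 [y0 [s0 K0]] Kc Kd.
pose n := size cs.
pose T y s := fun i => if (i < n)%N then bf y (nth 0 cs i) else s.
pose KI k := exists y s, K y s /\ k = T y s.
have [|||l [lpos Hl]] := @box_sep R n.+1 KI (T x t) eps e0.
- by exists (T y0 s0), y0, s0.
- move=> k1 k2 l l0 l1 [y1 [s1 [K1 ->]]] [y2 [s2 [K2 ->]]].
  exists (l *: y1 + (1 - l) *: y2), (l * s1 + (1 - l) * s2); split.
    exact: Kc.
  apply: funext => i; rewrite /T; case: ifP => // _.
  by rewrite (bfDl H) !(bfZl H).
- move=> k [y [s [Ky ->]]]; apply: contrapT => Hn.
  have Hall : forall i, (i < n.+1)%N -> `|T y s i - T x t i| < eps.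
    move=> i im; rewrite ltNge; apply/negP => He; apply: Hn; by exists i.
  apply: (Kd _ _ Ky); split.
    move=> c cin; have im : (index c cs < n)%N by rewrite index_mem.
    by have := Hall _ (leqW im); rewrite /T im (nth_index 0 cin) -(bfBl H).
  by have := Hall n (ltnSn n); rewrite /T ltnn.
exists (\sum_(i < n) l i *: nth 0 cs i), (l n), (eps / 2 * \sum_(i < n.+1) `|l i|).
split; first by apply: mulr_gt0 => //; apply: divr_gt0.
have lfT : forall y s, lf n.+1 l (T y s) =
     bf y (\sum_(i < n) l i *: nth 0 cs i) + l n * s.
  move=> y s; rewrite /lf big_ord_recr /= /T ltnn (bf_sumr H); congr (_ + _).
  by apply: eq_bigr => i _; rewrite ltn_ord (bfZr H).
move=> y s Ky; have := Hl (T y s) (ex_intro _ y (ex_intro _ s (conj Ky erefl))).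
rewrite !lfT; lra.
Qed.

Lemma conv_convex (R : realType) (B : lmodType R) (A : set B) y1 y2 (l : R) :
  0 <= l -> l <= 1 -> conv A y1 -> conv A y2 ->
  conv A (l *: y1 + (1 - l) *: y2).
Proof.
move=> l0 l1 [s1 [H1 S1 ->]] [s2 [H2 S2 ->]].
have l1' : 0 <= 1 - l by lra.
exists ([seq (l * p.1, p.2) | p <- s1] ++ [seq ((1 - l) * p.1, p.2) | p <- s2]).
split.
- move=> p; rewrite mem_cat => /orP [] /mapP [q qin ->] /=.
    by have [q0 Aq] := H1 q qin; split => //; apply: mulr_ge0.
  by have [q0 Aq] := H2 q qin; split => //; apply: mulr_ge0.
- by rewrite big_cat !big_map /= -!mulr_sumr S1 S2 !mulr1 addrC subrK.
- rewrite big_cat !big_map /= !scaler_sumr; congr (_ + _);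
  by apply: eq_bigr => p _; rewrite scalerA.
Qed.

Lemma conv_sub (R : realType) (B : lmodType R) (A : set B) a :
  A a -> conv A a.
Proof.
move=> Aa; exists [:: (1, a)]; split.
- by move=> p; rewrite inE => /eqP -> /=; split.
- by rewrite big_seq1.
- by rewrite big_seq1 scale1r.
Qed.

Local Open Scope ereal_scope.

Lemma epi_step (R : realType) (B : lmodType R) (bf : B -> B -> R)
  (f : B -> \bar R) : bilin bf -> wlsc bf f -> proper_fun f -> convex_fun f ->
  forall x (t : R), t%:E < f x ->
  exists d (mu delta : R), [/\ (0 < delta)%R, (mu <= 0)%R &
    forall y (s : R), f y <= s%:E ->
      (bf y d + mu * s + delta <= bf x d + mu * t)%R].
Proof.
move=> H fl [fN [x0 fx0]] fc x t tx.
have [t1 [tt1 t1x]] : exists t1 : R, (t < t1)%R /\ t1%:E < f x.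
  move: tx; case Efx: (f x) => [r| |] tx.
  - exists ((t + r) / 2)%R; rewrite lte_fin in tx; rewrite lte_fin; split; lra.
  - by exists (t + 1)%R; split; [lra | apply: ltry].
  - by have := fN x; rewrite Efx.
have [cs [eps0 e00 Hw]] := fl x t1 t1x.
pose eps := Num.min eps0 (t1 - t)%R.
have e0 : (0 < eps)%R by rewrite lt_min e00 subr_gt0.
have [r0 Er0] : exists r0 : R, f x0 = r0%:E.
  move: fx0 (fN x0); case: (f x0) => [r| |] //; by exists r.
have [|||d [mu [delta [dpos Hd]]]] :=
  @sepB R B bf cs eps (fun y s => f y <= s%:E) x t H e0.
- by exists x0, r0; rewrite Er0.
- move=> y1 s1 y2 s2 l l0 l1 K1 K2.
  have [->|ln0] := eqVneq l 0%R.
    by rewrite scale0r add0r subr0 scale1r mul0r add0r mul1r.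
  have [->|ln1] := eqVneq l 1%R.
    by rewrite scale1r subrr scale0r addr0 mul1r mul0r addr0.
  have lp : (0 < l)%R by rewrite lt_neqAle eq_sym ln0.
  have lq : (l < 1)%R by rewrite lt_neqAle ln1.
  apply: (le_trans (fc y1 y2 l lp lq)).
  rewrite (EFinD (l * s1)) (EFinM l s1) (EFinM (1 - l) s2); apply: leeD; apply: lee_wpmul2l => //;
    rewrite lee_fin; lra.
- move=> y s Ky [Hb Hs].
  have : t1%:E < f y.
    apply: Hw => c cin; apply: (lt_le_trans (Hb c cin)); by rewrite /eps ge_min lexx.
  have : (s < t1)%R.
    have : (eps <= t1 - t)%R by rewrite /eps ge_min lexx orbT.
    have := ler_norm (s - t)%R; lra.
  move=> st1 t1y.
  have : f y < t1%:E by apply: (le_lt_trans Ky); rewrite lte_fin.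
  by move=> /(lt_trans t1y); rewrite ltxx.
exists d, mu, delta; split => //.
rewrite leNgt; apply/negP => mup.
pose C := (bf x d + mu * t - bf x0 d - mu * r0 - delta)%R.
pose k := ((`|C| + 1) / mu)%R.
have k0 : (0 <= k)%R by apply: divr_ge0 => //; apply: ltW.
have mk : (mu * k = `|C| + 1)%R by rewrite /k mulrC divfK // gt_eqF.
have := Hd x0 (r0 + k)%R; rewrite Er0 lee_fin => /(_ ltac:(lra)).
have := ler_norm C; rewrite /C; lra.
Qed.

Lemma aff_of_neg (R : realType) (B : lmodType R) (bf : B -> B -> R)
  (f : B -> \bar R) x (t : R) d (mu delta : R) :
  bilin bf -> (forall y, f y != -oo) -> (mu < 0)%R -> (0 < delta)%R ->
  (forall y (s : R), f y <= s%:E ->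
      (bf y d + mu * s + delta <= bf x d + mu * t)%R) ->
  exists d' (be : R), (forall y, (bf y d' - be)%:E <= f y) /\
     (t < bf x d' - be)%R.
Proof.
move=> H fN mu0 d0 Hd.
pose iv := (- mu)^-1%R.
have iv0 : (0 < iv)%R by rewrite invr_gt0 oppr_gt0.
have ivmu : (iv * mu = -1)%R.
  by rewrite /iv -{2}(opprK mu) mulrN mulVf // oppr_eq0 lt_eqF.
exists (iv *: d), (iv * bf x d - t - iv * delta)%R; split.
  move=> y; rewrite (bfZr H).
  case Efy: (f y) => [s| |]; last by have := fN y; rewrite Efy.
    have := Hd y s; rewrite Efy lexx => /(_ isT) H2.
    have := ler_wpM2l (ltW iv0) H2; rewrite !mulrDr !mulrA ivmu.
    rewrite lee_fin; lra.
  exact: leey.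
rewrite (bfZr H).
have : (0 < iv * delta)%R by apply: mulr_gt0.
lra.
Qed.

Lemma minorant (R : realType) (B : lmodType R) (bf : B -> B -> R)
  (f : B -> \bar R) : bilin bf -> wlsc bf f -> proper_fun f -> convex_fun f ->
  forall x (t : R), t%:E < f x ->
  exists d (be : R), (forall y, (bf y d - be)%:E <= f y) /\
     (t < bf x d - be)%R.
Proof.
move=> H fl fp fc x t tx.
have fN := proj1 fp.
have [x0 [r0 Er0]] : exists x0 (r0 : R), f x0 = r0%:E.
  have [x0 fx0] := proj2 fp; exists x0.
  move: fx0 (fN x0); case: (f x0) => [r| |] //; by exists r.
have [d0 [be0 [Hm0 _]]] : exists d (be : R),
    (forall y, (bf y d - be)%:E <= f y) /\ (r0 - 1 < bf x0 d - be)%R.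
  have [|d [mu [delta [dpos mu0 Hd]]]] := epi_step H fl fp fc (t := (r0 - 1)%R) (x := x0).
    by rewrite Er0 lte_fin; lra.
  have mun : (mu < 0)%R.
    have := Hd x0 r0; rewrite Er0 lexx => /(_ isT); nra.
  exact: aff_of_neg mun dpos Hd.
have [d [mu [delta [dpos mu0 Hd]]]] := epi_step H fl fp fc tx.
have [mun|mue] := ltP mu 0%R; first exact: aff_of_neg mun dpos Hd.
have mz : mu = 0%R by apply/eqP; rewrite eq_le mu0 mue.
pose k : R := ((`|t - bf x d0 + be0| + 1) / delta)%R.
have k0 : (0 <= k)%R by apply: divr_ge0; [apply: addr_ge0 => //; exact: normr_ge0 | apply: ltW].
have kd : (k * delta = `|t - bf x d0 + be0| + 1)%R by rewrite /k divfK // gt_eqF.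
exists (d0 + k *: d)%R, (be0 + k * bf x d - k * delta)%R; split.
  move=> y; rewrite (bfDr H) (bfZr H).
  case Efy: (f y) => [s| |]; last by have := fN y; rewrite Efy.
    have := Hd y s; rewrite Efy lexx mz => /(_ isT) H2.
    have := Hm0 y; rewrite Efy lee_fin => H3.
    have : (k * (bf y d - bf x d + delta) <= 0)%R.
      by apply: mulr_ge0_le0 => //; lra.
    rewrite lee_fin; lra.
  exact: leey.
rewrite (bfDr H) (bfZr H).
have := ler_norm (t - bf x d0 + be0)%R; lra.
Qed.

Lemma PhiA_le (R : realType) (B : lmodType R) (bf : B -> B -> R) (A : set B)
  x (M : R) : (forall a, A a -> (bf x a - qf bf a <= M)%R) ->
  PhiA bf A x <= M%:E.
Proof. by move=> HM; apply: ge_ereal_sup => _ [a Aa <-]; rewrite lee_fin HM. Qed.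

Lemma PhiA_ge (R : realType) (B : lmodType R) (bf : B -> B -> R) (A : set B)
  x a : A a -> (bf x a - qf bf a)%:E <= PhiA bf A x.
Proof. by move=> Aa; apply: ereal_sup_ubound; exists a. Qed.

Lemma fat_ge (R : realType) (B : lmodType R) (bf : B -> B -> R)
  (g : B -> \bar R) b c : (bf c b)%:E - g c <= fat bf g b.
Proof. by apply: ereal_sup_ubound; exists c. Qed.

Lemma subE_le (R : realType) (u : R) (e : \bar R) (be : R) :
  e <= be%:E -> (u - be)%:E <= u%:E - e.
Proof.
case: e => [r| |] //.
  by rewrite !lee_fin => h; lra.
by move=> _; rewrite /= leey.
Qed.

Lemma PhiA_on (R : realType) (B : lmodType R) (bf : B -> B -> R) (A : set B) a :
  bilin bf -> (forall b c, A b -> A c -> (0 <= qf bf (b - c))%R) -> A a ->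
  PhiA bf A a = (qf bf a)%:E.
Proof.
move=> H qp Aa; apply/eqP; rewrite eq_le; apply/andP; split.
  apply: PhiA_le => c Ac; have := qp a c Aa Ac; rewrite (qfB H); lra.
have -> : qf bf a = (bf a a - qf bf a)%R by rewrite /qf; field.
exact: PhiA_ge.
Qed.

Theorem mainTheorem12 (R : realType) (B : lmodType R) (bf : B -> B -> R)
  (A : set B) :
  SSD_space bf ->
  q_representable bf A ->
  (forall b, convw bf A b -> ((qf bf b)%:E <= PhiA bf A b)%E) ->
  A = Gf bf (PhiA bf A).
Proof.
move=> [_ [bsym blin]] [[[a0 Aa0] qp] [f [fl fp fc fq fA]]] Hconv.
have H : bilin bf by split.
have fAq : forall a, A a -> f a = (qf bf a)%:E by move=> a; rewrite -fA.
have PhiGe : forall c a, A a -> (bf c a - qf bf a)%:E <= PhiA bf A c.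
  by move=> c a Aa; exact: PhiA_ge.
apply/seteqP; split => b.
  move=> Ab; rewrite /Gf /= (PhiA_on H qp Ab).
  have -> : fat bf (PhiA bf A) b = (qf bf b)%:E.
    apply/eqP; rewrite eq_le; apply/andP; split.
      apply: ge_ereal_sup => _ [c _ <-].
      have := PhiGe c b Ab.
      case: (PhiA bf A c) => [r| |] //.
        by rewrite !lee_fin => h; lra.
      by move=> _; rewrite /= leNye.
    have := fat_ge bf (PhiA bf A) b b.
    rewrite (PhiA_on H qp Ab) -EFinB.
    have -> : (bf b b - qf bf b)%R = qf bf b by rewrite /qf; field.
    by [].
  by rewrite -EFinD /qf; congr (_%:E); field.
move=> Gb; rewrite -fA /Pq /=.
have [p Ep] : exists p : R, PhiA bf A b = p%:E.
  have := PhiGe b a0 Aa0; move: Gb; rewrite /Gf /=.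
  case: (PhiA bf A b) => [r| |] //; first by exists r.
  have := fat_ge bf (PhiA bf A) b a0; rewrite (PhiA_on H qp Aa0).
  by case: (fat bf (PhiA bf A) b).
have [phi Ephi] : exists phi : R, fat bf (PhiA bf A) b = phi%:E.
  have := fat_ge bf (PhiA bf A) b a0; rewrite (PhiA_on H qp Aa0).
  move: Gb; rewrite /Gf /= Ep.
  by case: (fat bf (PhiA bf A) b) => [r| |] //; exists r.
have sumE : (p + phi = bf b b)%R.
  by move: Gb; rewrite /Gf /= Ep Ephi -EFinD => -[].
have fbphi : f b <= phi%:E.
  rewrite leNgt; apply/negP => /(minorant H fl fp fc) [d [be [Hm Hlt]]].
  have Pd : PhiA bf A d <= be%:E.
    apply: PhiA_le => a Aa; have := Hm a; rewrite fAq // lee_fin bsym; lra.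
  have := fat_ge bf (PhiA bf A) b d; rewrite Ephi.
  move=> /(le_trans (subE_le (bf d b) Pd)); rewrite lee_fin bsym; lra.
have bconv : convw bf A b.
  apply: contrapT => /existsNP [cs /existsNP [eps /not_implyP [e0 Hne]]].
  have Hd : forall y, conv A y -> ~ wball bf b cs eps y.
    by move=> y cy wy; apply: Hne; exists y.
  have [||| d [mu [delta [dpos Hsep]]]] :=
    @sepB R B bf cs eps (fun y s => conv A y /\ s = 0%R) b 0%R H e0.
  - by exists a0, 0%R; split => //; exact: conv_sub.
  - move=> y1 s1 y2 s2 l l0 l1 [c1 ->] [c2 ->]; split.
      exact: conv_convex.
    by rewrite !mulr0 addr0.
  - move=> y s [cy ->] [Hb _]; exact: (Hd y cy Hb).
  have Ha : forall a, A a -> (bf a d + delta <= bf b d)%R.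
    move=> a Aa; have := Hsep a 0%R (conj (conv_sub Aa) erefl).
    by rewrite !mulr0 !addr0.
  have [d0 [be0 [Hm0 _]]] := minorant H fl fp fc (x := a0) (t := (qf bf a0 - 1)%R)
    ltac:(rewrite fAq // lte_fin; lra).
  pose C : R := (phi - (bf d0 b - be0))%R.
  pose r : R := ((`|C| + 1) / delta)%R.
  have r0 : (0 <= r)%R by apply: divr_ge0; [apply: addr_ge0 => //; exact: normr_ge0 | apply: ltW].
  have rd : (r * delta = `|C| + 1)%R by rewrite /r divfK // gt_eqF.
  have Pd : PhiA bf A (d0 + r *: d)%R <= (be0 + r * (bf b d - delta))%:E.
    apply: PhiA_le => a Aa.
    rewrite (bfDl H) (bfZl H) (bsym d0) (bsym d).
    have := Hm0 a; rewrite fAq // lee_fin => h1.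
    have := ler_wpM2l r0 (Ha a Aa) => h2.
    lra.
  have := fat_ge bf (PhiA bf A) b (d0 + r *: d)%R; rewrite Ephi.
  move=> /(le_trans (subE_le _ Pd)); rewrite lee_fin (bfDl H) (bfZl H).
  have := ler_norm C; move: rd; rewrite /C (bsym d b); lra.
have := Hconv b bconv; rewrite Ep lee_fin => qp'.
apply/eqP; rewrite eq_le fq andbT.
apply: (le_trans fbphi); rewrite lee_fin.
move: sumE qp'; rewrite /qf; lra.
Qed.
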